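(* Given an NC-spectrum graph $G=(V,E)$ with nodes $x_0,\dots,x_k,y_k,\dots,y_0$, Algorithm Compute-M (described in the context) computes the table $M$ (defined in the context) in $O(|V|^2)$ time.
   Context: Fix a finite set $\mathcal{R}$ of positive reals (the amino acid masses). A real $m$ is an amino-acid mass sum if $m=r_1+\cdots+r_t$ for some $t\ge1$, $r_i\in\mathcal{R}$ (repetitions allowed). Given a peptide mass $W$ and $k$ ion masses $w_1,\dots,w_k$, the NC-spectrum graph $G=(V,E)$ has vertex set $V=\{N_0,\dots,N_k,C_0,\dots,C_k\}$ ($|V|=2k+2$) with coordinates $\mathrm{cord}(N_0)=0$, $\mathrm{cord}(C_0)=W-18$, $\mathrm{cord}(N_j)=w_j-1$, $\mathrm{cord}(C_j)=W-w_j$ ($1\le j\le k$); for $j\ge1$, $N_j,C_j$ are derived from the $j$-th ion. There is an edge from $u$ to $v$ ($E(u,v)=1$, else $E(u,v)=0$) iff $u,v$ are not derived from the same ion, $\mathrm{cord}(u)<\mathrm{cord}(v)$, and $\mathrm{cord}(v)-\mathrm{cord}(u)$ is an amino-acid mass sum. The nodes are listed in increasing coordinate order as $x_0,x_1,\dots,x_k,y_k,\dots,y_1,y_0$, with $x_0=N_0$, $y_0=C_0$ and $\{x_j,y_j\}$ the pair derived from one ion ($j\ge1$); every edge goes from a node to a later node in this list; edge queries take $O(1)$ time. The table $M$: for $0\le i,j\le k$, $M(i,j)=1$ if there exist a directed path $L$ from $x_0$ to $x_i$ and a directed path $R$ from $y_j$ to $y_0$ (a path may be a single node) such that $L\cup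 R$ contains exactly one of $x_p$ and $y_p$ for every $1\le p\le\max(i,j)$, and $M(i,j)=0$ otherwise. Algorithm Compute-M: (1) set $M(0,0)=1$ and $M(i,j)=0$ for all other $(i,j)$; (2) compute $M(1,0)$ and $M(0,1)$ (directly from the definition); (3) for $j=2$ to $k$: (4) for $i=0$ to $j-2$: (a) if $M(i,j-1)=1$ and $E(x_i,x_j)=1$, set $M(j,j-1)=1$; (b) if $M(i,j-1)=1$ and $E(y_j,y_{j-1})=1$, set $M(i,j)=1$; (c) if $M(j-1,i)=1$ and $E(x_{j-1},x_j)=1$, set $M(j,i)=1$; (d) if $M(j-1,i)=1$ and $E(y_j,y_i)=1$, set $M(j-1,j)=1$. *)

(* Defs.v *)
From Stdlib Require Import Reals List Arith Bool.
Import ListNotations.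
Open Scope bool_scope.

(* m is an amino-acid mass sum over the finite set Rs of amino-acid masses:
   m = r_1 + ... + r_t, t >= 1, each r_i in Rs (repetitions allowed). *)
Definition mass_sum (Rs : list R) (m : R) : Prop :=
  exists l : list R, l <> [] /\ Forall (fun r => In r Rs) l /\
                     fold_right Rplus 0%R l = m.

Inductive ncnode := Nn (j : nat) | Cn (j : nat).

Definition ion (u : ncnode) : nat := match u with Nn j => j | Cn j => j end.

Definition in_V (k : nat) (u : ncnode) : Prop := (ion u <= k)%nat.

Definition cord (W : R) (w : nat -> R) (u : ncnode) : R :=
  match u with
  | Nn 0 => 0%R
  | Nn j => (w j - 1)%R
  | Cn 0 => (W - 18)%R
  | Cn j => (W - w j)%R
  end.

Definition same_ion (u v : ncnode) : Prop := (1 <= ion u)%nat /\ ion u = ion v.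

Definition Edge (Rs : list R) (W : R) (w : nat -> R) (k : nat)
  (u v : ncnode) : Prop :=
  in_V k u /\ in_V k v /\ ~ same_ion u v /\
  (cord W w u < cord W w v)%R /\ mass_sum Rs (cord W w v - cord W w u)%R.

Definition xn (side : nat -> bool) (j : nat) : ncnode :=
  match j with 0 => Nn 0 | _ => if side j then Nn j else Cn j end.
Definition yn (side : nat -> bool) (j : nat) : ncnode :=
  match j with 0 => Cn 0 | _ => if side j then Cn j else Nn j end.

Definition listed (W : R) (w : nat -> R) (k : nat) (side : nat -> bool) : Prop :=
  (forall i j, (i <= j <= k)%nat ->
     (cord W w (xn side i) <= cord W w (xn side j))%R) /\
  (cord W w (xn side k) <= cord W w (yn side k))%R /\
  (forall i j, (i <= j <= k)%nat ->
     (cord W w (yn side j) <= cord W w (yn side i))%R).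

Fixpoint chain (E : ncnode -> ncnode -> Prop) (a : ncnode) (l : list ncnode)
  : Prop :=
  match l with
  | [] => True
  | b :: l' => E a b /\ chain E b l'
  end.

Definition dpath (E : ncnode -> ncnode -> Prop) (a b : ncnode)
  (p : list ncnode) : Prop :=
  exists l, p = a :: l /\ chain E a l /\ last p a = b.

Definition Mdef (Rs : list R) (W : R) (w : nat -> R) (k : nat)
  (side : nat -> bool) (i j : nat) : Prop :=
  exists L Rp : list ncnode,
    dpath (Edge Rs W w k) (xn side 0) (xn side i) L /\
    dpath (Edge Rs W w k) (yn side j) (yn side 0) Rp /\
    forall p, (1 <= p <= Nat.max i j)%nat ->
      (In (xn side p) (L ++ Rp) /\ ~ In (yn side p) (L ++ Rp)) \/
      (~ In (xn side p) (L ++ Rp) /\ In (yn side p) (L ++ Rp)).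

(* State: the table M and the number of elementary operations performed.
   Cost model: every table write, table read, O(1) edge query, and loop
   iteration costs one tick. *)
Record state := St { tab : nat -> nat -> bool; ticks : nat }.

Definition write (s : state) (a b : nat) (v : bool) : state :=
  St (fun x y => if Nat.eqb x a && Nat.eqb y b then v else tab s x y)
     (S (ticks s)).

(* "if M(a,b) = 1 and E(u,v) = 1, set M(c,d) = 1" : one read, one edge query,
   possibly one write. *)
Definition cond_set (e : ncnode -> ncnode -> bool) (s : state)
  (a b : nat) (u v : ncnode) (c d : nat) : state :=
  let s1 := St (tab s) (ticks s + 2) in
  if tab s a b && e u v then write s1 c d true else s1.

Definition body (e : ncnode -> ncnode -> bool) (side : nat -> bool)
  (j i : nat) (s : state) : state :=
  let s := St (tab s) (S (ticks s)) in
  let s := cond_set e s i (j - 1) (xn side i) (xn side j) j (j - 1) in          (* (a) *)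
  let s := cond_set e s i (j - 1) (yn side j) (yn side (j - 1)) i j in          (* (b) *)
  let s := cond_set e s (j - 1) i (xn side (j - 1)) (xn side j) j i in          (* (c) *)
  cond_set e s (j - 1) i (yn side j) (yn side i) (j - 1) j.                     (* (d) *)

Definition compute_M (e : ncnode -> ncnode -> bool) (side : nat -> bool)
  (k : nat) : state :=
  let s0 := St (fun _ _ => false) 0 in
  let s1 := fold_left
              (fun s i => fold_left (fun s j => write s i j (Nat.eqb i 0 && Nat.eqb j 0))
                                    (seq 0 (S k)) s)
              (seq 0 (S k)) s0 in
  (* (2) M(1,0) and M(0,1), directly from the definition:
     M(1,0) = E(x_0,x_1) and M(0,1) = E(y_1,y_0) *)
  let s2 := if Nat.leb 1 k then
              let s := St (tab s1) (ticks s1 + 2) in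
              let s := write s 1 0 (e (xn side 0) (xn side 1)) in
              write s 0 1 (e (yn side 1) (yn side 0))
            else s1 in
  (* (3)-(4) for j = 2..k, for i = 0..j-2 *)
  fold_left
    (fun s j => fold_left (fun s i => body e side j i s)
                          (seq 0 (j - 1)) (St (tab s) (S (ticks s))))
    (seq 2 (k - 1)) s2.

(* Main.v *)
Require Import Defs.
From Stdlib Require Import Reals List Arith Lia Lra Bool Btauto Classical.
Import ListNotations.

Lemma ion_xn side p : ion (xn side p) = p.
Proof. destruct p; simpl; [reflexivity|destruct (side (S p)); reflexivity]. Qed.
Lemma ion_yn side p : ion (yn side p) = p.
Proof. destruct p; simpl; [reflexivity|destruct (side (S p)); reflexivity]. Qed.
Lemma xn_yn side p q : xn side p <> yn side q.
Proof. intro H. assert (p = q) by (rewrite <- (ion_xn side p), <- (ion_yn side q), H; reflexivity).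
  subst q. destruct p; simpl in H; [discriminate|destruct (side (S p)); discriminate]. Qed.
Lemma xn_inj side p q : xn side p = xn side q -> p = q.
Proof. intro H. rewrite <- (ion_xn side p), <- (ion_xn side q), H. reflexivity. Qed.
Lemma yn_inj side p q : yn side p = yn side q -> p = q.
Proof. intro H. rewrite <- (ion_yn side p), <- (ion_yn side q), H. reflexivity. Qed.
Lemma node_class k side u : in_V k u -> u = xn side (ion u) \/ u = yn side (ion u).
Proof. intros _. destruct u as [[|j]|[|j]]; simpl; auto; destruct (side (S j)); auto. Qed.

Lemma last_indep {A} (c a b : A) l : last (c :: l) b = last (c :: l) a.
Proof. revert c; induction l as [|d l IH]; intros; [reflexivity|]. change (last (d :: l) b = last (d :: l) a). apply IH. Qed.
Lemma last_cons {A} (a b : A) l : last (a :: l) b = last l a.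
Proof. destruct l; [reflexivity|]. change (last (a0 :: l) b = last (a0 :: l) a). apply last_indep. Qed.

Lemma chain_gt Rs W w k a l : chain (Edge Rs W w k) a l ->
  forall u, In u l -> (cord W w a < cord W w u)%R /\ in_V k u.
Proof.
  revert a; induction l as [|b l IH]; simpl; intros a H u Hu; [contradiction|].
  destruct H as [Hab Hc]. destruct Hab as (_&Hb&_&Hlt&_).
  destruct Hu as [<-|Hu]; [auto|]. destruct (IH b Hc u Hu). split; [lra|auto].
Qed.

Lemma chain_last Rs W w k a l : chain (Edge Rs W w k) a l ->
  forall u, In u (a :: l) -> u = last l a \/ (cord W w u < cord W w (last l a))%R.
Proof.
  revert a; induction l as [|b l IH]; intros a H u Hu.
  - destruct Hu as [<-|[]]; auto.
  - destruct H as [Hab Hc]. rewrite (last_cons b a l).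
    destruct Hu as [<-|Hu].
    + right. destruct Hab as (_&_&_&Hlt&_).
      destruct (IH b Hc b (or_introl eq_refl)) as [E|E]; [rewrite <- E|]; lra.
    + apply IH; auto.
Qed.

Lemma chain_app E a l1 l2 : chain E a (l1 ++ l2) <-> chain E a l1 /\ chain E (last l1 a) l2.
Proof.
  revert a; induction l1 as [|b l IH]; intros a; cbn [app chain]; [simpl; tauto|].
  rewrite IH. rewrite (last_cons b a l). tauto.
Qed.

Lemma lx W w k side i j : listed W w k side -> (i <= j <= k)%nat ->
  (cord W w (xn side i) <= cord W w (xn side j))%R.
Proof. intros [H _]; auto. Qed.
Lemma ly W w k side i j : listed W w k side -> (i <= j <= k)%nat ->
  (cord W w (yn side j) <= cord W w (yn side i))%R.
Proof. intros (_&_&H); auto. Qed.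
Lemma lxy W w k side i j : listed W w k side -> (i <= k)%nat -> (j <= k)%nat ->
  (cord W w (xn side i) <= cord W w (yn side j))%R.
Proof. intros HL Hi Hj. pose proof (lx W w k side i k HL ltac:(lia)).
  pose proof (ly W w k side j k HL ltac:(lia)). destruct HL as (_&H3&_). lra. Qed.

Lemma Lcont Rs W w k side i L : listed W w k side -> (i <= k)%nat ->
  dpath (Edge Rs W w k) (xn side 0) (xn side i) L ->
  forall u, In u L -> exists p, (p <= i)%nat /\ u = xn side p.
Proof.
  intros HL Hi (l & -> & Hc & Hlast) u Hu.
  rewrite last_cons in Hlast.
  destruct Hu as [<-|Hu']; [exists 0%nat; split; [lia|reflexivity]|].
  destruct (chain_gt _ _ _ _ _ _ Hc u Hu') as [Hgt HV].
  destruct (chain_last _ _ _ _ _ _ Hc u (or_intror Hu')) as [E|E]; rewrite Hlast in E.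
  - subst u. exists i. auto.
  - destruct (node_class k side u HV) as [Hx|Hy].
    + exists (ion u). split; [|exact Hx].
      destruct (le_lt_dec (ion u) i) as [|Hlt]; [auto|].
      exfalso. pose proof (lx W w k side i (ion u) HL ltac:(unfold in_V in HV; lia)).
      rewrite <- Hx in H. lra.
    + exfalso. pose proof (lxy W w k side i (ion u) HL Hi HV). rewrite <- Hy in H. lra.
Qed.

Lemma Rcont Rs W w k side j R : listed W w k side -> (j <= k)%nat ->
  dpath (Edge Rs W w k) (yn side j) (yn side 0) R ->
  forall u, In u R -> exists p, (p <= j)%nat /\ u = yn side p.
Proof.
  intros HL Hj (l & -> & Hc & Hlast) u Hu.
  destruct Hu as [<-|Hu']; [exists j; split; [lia|reflexivity]|].
  destruct (chain_gt _ _ _ _ _ _ Hc u Hu') as [Hgt HV].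
  destruct (node_class k side u HV) as [Hx|Hy].
  - exfalso. pose proof (lxy W w k side (ion u) j HL HV Hj). rewrite <- Hx in H. lra.
  - exists (ion u). split; [|exact Hy].
    destruct (le_lt_dec (ion u) j) as [|Hlt]; [auto|].
    exfalso. pose proof (ly W w k side j (ion u) HL ltac:(unfold in_V in HV; lia)).
    rewrite <- Hy in H. lra.
Qed.

Lemma last_In' {A} (l : list A) d : l <> [] -> In (last l d) l.
Proof. induction l as [|a l IH]; intros H; [congruence|]. destruct l as [|b l]; [simpl; auto|].
  change (In (last (b :: l) d) (a :: b :: l)). right. apply IH. discriminate. Qed.

Lemma Edge_irrefl Rs W w k u : ~ Edge Rs W w k u u.
Proof. intros (_&_&_&H&_). lra. Qed.

Lemma dpath_ext_r E a b c L : dpath E a b L -> E b c -> dpath E a c (L ++ [c]).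
Proof.
  intros (l & -> & Hc & Hl) Hbc. rewrite last_cons in Hl. exists (l ++ [c]). split; [reflexivity|].
  split. - apply chain_app. split; [auto|]. rewrite Hl. simpl. auto.
  - apply last_last.
Qed.

Lemma dpath_ext_l E a b c R : dpath E b c R -> E a b -> dpath E a c (a :: R).
Proof.
  intros (l & -> & Hc & Hl) Hab. exists (b :: l). split; [reflexivity|].
  split. - simpl. auto. - rewrite last_cons, (last_indep b b a l). exact Hl.
Qed.

Lemma Ldec Rs W w k side i L : listed W w k side -> (1 <= i <= k)%nat ->
  dpath (Edge Rs W w k) (xn side 0) (xn side i) L ->
  exists L' q, (q < i)%nat /\ dpath (Edge Rs W w k) (xn side 0) (xn side q) L' /\
    Edge Rs W w k (xn side q) (xn side i) /\ L = L' ++ [xn side i].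
Proof.
  intros HL Hi HP. pose proof (Lcont Rs W w k side i L HL ltac:(lia) HP) as Hcont.
  destruct HP as (l & -> & Hc & Hlast).
  rewrite last_cons in Hlast.
  destruct (exists_last (l := l)) as (l' & b & ->).
  { intros ->. simpl in Hlast. change (xn side 0 = xn side i) in Hlast; apply xn_inj in Hlast. lia. }
  rewrite last_last in Hlast. subst b.
  apply chain_app in Hc. destruct Hc as [Hc1 Hc2]. cbn [chain] in Hc2. destruct Hc2 as [He _].
  destruct (Hcont (last l' (xn side 0))) as (q & Hq & Eq).
  { destruct l' as [|c l'']. simpl. auto.
    right. apply in_or_app. left.
    apply last_In'. discriminate. }
  rewrite Eq in He.
  exists (xn side 0 :: l'), q. split; [|split; [|split]].
  - destruct (Nat.eq_dec q i); [subst; apply Edge_irrefl in He; contradiction|lia].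
  - exists l'. split; [reflexivity|]. split; [auto|]. rewrite last_cons. auto.
  - auto.
  - reflexivity.
Qed.

Lemma Rdec Rs W w k side j R : listed W w k side -> (1 <= j <= k)%nat ->
  dpath (Edge Rs W w k) (yn side j) (yn side 0) R ->
  exists R' q, (q < j)%nat /\ dpath (Edge Rs W w k) (yn side q) (yn side 0) R' /\
    Edge Rs W w k (yn side j) (yn side q) /\ R = yn side j :: R'.
Proof.
  intros HL Hj HP. pose proof (Rcont Rs W w k side j R HL ltac:(lia) HP) as Hcont.
  destruct HP as (l & -> & Hc & Hlast).
  destruct l as [|v l'].
  { simpl in Hlast. change (yn side j = yn side 0) in Hlast; apply yn_inj in Hlast. lia. }
  destruct Hc as [He Hc].
  destruct (Hcont v) as (q & Hq & Eq); [simpl; auto|]. subst v.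
  exists (yn side q :: l'), q. split; [|split; [|split]].
  - destruct (Nat.eq_dec q j); [subst; apply Edge_irrefl in He; contradiction|lia].
  - exists l'. split; [reflexivity|]. split; [auto|].
    rewrite last_cons in Hlast. rewrite (last_indep _ (yn side q) (yn side j)) in Hlast. exact Hlast.
  - auto.
  - reflexivity.
Qed.

Definition Good side (L R : list ncnode) m := forall p, (1 <= p <= m)%nat ->
  (In (xn side p) L /\ ~ In (yn side p) R) \/ (~ In (xn side p) L /\ In (yn side p) R).

Definition Mdef2 Rs W w k side i j := exists L R,
  dpath (Edge Rs W w k) (xn side 0) (xn side i) L /\
  dpath (Edge Rs W w k) (yn side j) (yn side 0) R /\ Good side L R (Nat.max i j).

Lemma Mdef_iff Rs W w k side i j : listed W w k side -> (i <= k)%nat -> (j <= k)%nat ->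
  (Mdef Rs W w k side i j <-> Mdef2 Rs W w k side i j).
Proof.
  intros HL Hi Hj.
  assert (key : forall L R, dpath (Edge Rs W w k) (xn side 0) (xn side i) L ->
    dpath (Edge Rs W w k) (yn side j) (yn side 0) R -> forall p,
    (In (xn side p) (L ++ R) <-> In (xn side p) L) /\ (In (yn side p) (L ++ R) <-> In (yn side p) R)).
  { intros L R HLp HRp p. pose proof (Lcont _ _ _ _ _ _ _ HL Hi HLp) as CL.
    pose proof (Rcont _ _ _ _ _ _ _ HL Hj HRp) as CR.
    split; rewrite in_app_iff; split; try tauto; intros [H|H]; auto.
    - destruct (CR _ H) as (q & _ & Eq). exfalso; eapply xn_yn; eauto.
    - destruct (CL _ H) as (q & _ & Eq). exfalso; eapply xn_yn; eauto. }
  split; intros (L & R & H1 & H2 & H3); exists L, R; (split; [auto|split; [auto|]]);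
    intros p Hp; specialize (H3 p Hp); destruct (key L R H1 H2 p) as [K1 K2];
    rewrite ?K1, ?K2 in *; exact H3.
Qed.

Lemma In_last_dpath E a b L : dpath E a b L -> In b L.
Proof. intros (l & -> & _ & Hl). rewrite <- Hl. apply last_In'. discriminate. Qed.
Lemma In_head_dpath E a b L : dpath E a b L -> In a L.
Proof. intros (l & -> & _ & _). left; auto. Qed.

Lemma G1 side L' R m m' j : Good side (L' ++ [xn side j]) R m -> (m' <= m)%nat -> (m' < j)%nat ->
  Good side L' R m'.
Proof.
  intros G H1 H2 p Hp. destruct (G p ltac:(lia)) as [[A B]|[A B]].
  - left. split; auto. apply in_app_iff in A. destruct A as [A|[A|[]]]; auto.
    apply xn_inj in A. lia.
  - right. split; auto. intro C. apply A, in_app_iff; auto.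
Qed.

Lemma G2 side L' R j : Good side L' R (j - 1) -> ~ In (yn side j) R ->
  Good side (L' ++ [xn side j]) R j.
Proof.
  intros G Hy p Hp. destruct (Nat.eq_dec p j) as [->|Hne].
  - left. split; auto. apply in_app_iff. right. left. auto.
  - destruct (G p ltac:(lia)) as [[A B]|[A B]].
    + left. split; auto. apply in_app_iff; auto.
    + right. split; auto. intro C. apply in_app_iff in C. destruct C as [C|[C|[]]]; auto.
      apply xn_inj in C. lia.
Qed.

Lemma G3 side L R' m m' j : Good side L (yn side j :: R') m -> (m' <= m)%nat -> (m' < j)%nat ->
  Good side L R' m'.
Proof.
  intros G H1 H2 p Hp. destruct (G p ltac:(lia)) as [[A B]|[A B]].
  - left. split; auto. intro C. apply B. right. auto.
  - right. split; auto. destruct B as [B|B]; auto. apply yn_inj in B. lia.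
Qed.

Lemma G4 side L R' j : Good side L R' (j - 1) -> ~ In (xn side j) L ->
  Good side L (yn side j :: R') j.
Proof.
  intros G Hx p Hp. destruct (Nat.eq_dec p j) as [->|Hne].
  - right. split; auto. left. auto.
  - destruct (G p ltac:(lia)) as [[A B]|[A B]].
    + left. split; auto. intros [C|C]; auto. apply yn_inj in C. lia.
    + right. split; auto. right. auto.
Qed.

Lemma dpath_single E a : dpath E a a [a].
Proof. exists []. simpl. auto. Qed.

Lemma P00 Rs W w k side : Mdef2 Rs W w k side 0 0.
Proof. exists [xn side 0], [yn side 0]. split; [apply dpath_single|split; [apply dpath_single|]].
  intros p Hp. simpl in Hp. lia. Qed.

Lemma Pdiag Rs W w k side i : (1 <= i)%nat -> ~ Mdef2 Rs W w k side i i.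
Proof.
  intros Hi (L & R & H1 & H2 & H3). rewrite Nat.max_id in H3.
  destruct (H3 i ltac:(lia)) as [[A B]|[A B]].
  - apply B. eapply In_head_dpath; eauto.
  - apply A. eapply In_last_dpath; eauto.
Qed.

Lemma notin_R Rs W w k side j R q : listed W w k side -> (j <= k)%nat -> (j < q)%nat ->
  dpath (Edge Rs W w k) (yn side j) (yn side 0) R -> ~ In (yn side q) R.
Proof. intros HL Hj Hq HR C. destruct (Rcont _ _ _ _ _ _ _ HL Hj HR _ C) as (p & Hp & E).
  apply yn_inj in E. lia. Qed.
Lemma notin_L Rs W w k side i L q : listed W w k side -> (i <= k)%nat -> (i < q)%nat ->
  dpath (Edge Rs W w k) (xn side 0) (xn side i) L -> ~ In (xn side q) L.
Proof. intros HL Hi Hq HR C. destruct (Lcont _ _ _ _ _ _ _ HL Hi HR _ C) as (p & Hp & E).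
  apply xn_inj in E. lia. Qed.

Lemma P10 Rs W w k side : listed W w k side -> (1 <= k)%nat ->
  (Mdef2 Rs W w k side 1 0 <-> Edge Rs W w k (xn side 0) (xn side 1)).
Proof.
  intros HL Hk. split.
  - intros (L & R & H1 & H2 & H3).
    destruct (Ldec Rs W w k side 1 L HL ltac:(lia) H1) as (L' & q & Hq & _ & He & _).
    replace q with 0%nat in He by lia. exact He.
  - intros He. exists ([xn side 0] ++ [xn side 1]), [yn side 0].
    split; [eapply dpath_ext_r; [apply dpath_single|exact He]|].
    split; [apply dpath_single|].
    apply G2. { intros p Hp. simpl in Hp. lia. }
    apply (notin_R Rs W w k side 0); [auto|lia|lia|apply dpath_single].
Qed.

Lemma P01 Rs W w k side : listed W w k side -> (1 <= k)%nat ->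
  (Mdef2 Rs W w k side 0 1 <-> Edge Rs W w k (yn side 1) (yn side 0)).
Proof.
  intros HL Hk. split.
  - intros (L & R & H1 & H2 & H3).
    destruct (Rdec Rs W w k side 1 R HL ltac:(lia) H2) as (R' & q & Hq & _ & He & _).
    replace q with 0%nat in He by lia. exact He.
  - intros He. exists [xn side 0], (yn side 1 :: [yn side 0]).
    split; [apply dpath_single|].
    split; [eapply dpath_ext_l; [apply dpath_single|exact He]|].
    apply G4. { intros p Hp. simpl in Hp. lia. }
    apply (notin_L Rs W w k side 0); [auto|lia|lia|apply dpath_single].
Qed.

Lemma Pa Rs W w k side j : listed W w k side -> (2 <= j <= k)%nat ->
  (Mdef2 Rs W w k side j (j - 1) <-> exists i, (i <= j - 2)%nat /\
     Mdef2 Rs W w k side i (j - 1) /\ Edge Rs W w k (xn side i) (xn side j)).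
Proof.
  intros HL Hj. split.
  - intros (L & R & H1 & H2 & H3).
    destruct (Ldec Rs W w k side j L HL ltac:(lia) H1) as (L' & q & Hq & HL' & He & ->).
    assert (q <> j - 1).
    { intros ->. destruct (H3 (j-1)%nat ltac:(lia)) as [[A B]|[A B]].
      - apply B. eapply In_head_dpath; eauto.
      - apply A. apply in_app_iff. left. eapply In_last_dpath; eauto. }
    exists q. split; [lia|]. split; [|auto].
    exists L', R. split; [auto|split; [auto|]].
    eapply G1; [exact H3|lia|lia].
  - intros (i & Hi & (L & R & H1 & H2 & H3) & He).
    exists (L ++ [xn side j]), R. split; [eapply dpath_ext_r; eauto|split; [auto|]].
    replace (Nat.max j (j-1)) with j by lia.
    apply G2. { replace (j-1)%nat with (Nat.max i (j-1)) by lia. auto. }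
    eapply notin_R; [eauto| |idtac|eauto]; lia.
Qed.

Lemma Pb Rs W w k side j i : listed W w k side -> (2 <= j <= k)%nat -> (i <= j - 2)%nat ->
  (Mdef2 Rs W w k side i j <-> Mdef2 Rs W w k side i (j - 1) /\
     Edge Rs W w k (yn side j) (yn side (j - 1))).
Proof.
  intros HL Hj Hi. split.
  - intros (L & R & H1 & H2 & H3).
    destruct (Rdec Rs W w k side j R HL ltac:(lia) H2) as (R' & q & Hq & HR' & He & ->).
    assert (q = j - 1).
    { destruct (H3 (j-1)%nat ltac:(lia)) as [[A B]|[A B]].
      - exfalso. eapply notin_L; [eauto| | |eauto|eauto]; lia.
      - destruct B as [B|B]; [apply yn_inj in B; lia|].
        destruct (Rcont Rs W w k side q R' HL ltac:(lia) HR' _ B) as (p & Hp & E).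
        apply yn_inj in E. lia. }
    subst q. split; [|auto].
    exists L, R'. split; [auto|split; [auto|]].
    eapply G3; [exact H3|lia|lia].
  - intros ((L & R & H1 & H2 & H3) & He).
    exists L, (yn side j :: R). split; [auto|split; [eapply dpath_ext_l; eauto|]].
    replace (Nat.max i j) with j by lia.
    apply G4. { replace (j-1)%nat with (Nat.max i (j-1)) by lia. auto. }
    eapply notin_L; [eauto| |idtac|eauto]; lia.
Qed.

Lemma Pc Rs W w k side j i : listed W w k side -> (2 <= j <= k)%nat -> (i <= j - 2)%nat ->
  (Mdef2 Rs W w k side j i <-> Mdef2 Rs W w k side (j - 1) i /\
     Edge Rs W w k (xn side (j - 1)) (xn side j)).
Proof.
  intros HL Hj Hi. split.
  - intros (L & R & H1 & H2 & H3).
    destruct (Ldec Rs W w k side j L HL ltac:(lia) H1) as (L' & q & Hq & HL' & He & ->).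
    assert (q = j - 1).
    { destruct (H3 (j-1)%nat ltac:(lia)) as [[A B]|[A B]].
      - apply in_app_iff in A. destruct A as [A|[A|[]]]; [|apply xn_inj in A; lia].
        destruct (Lcont Rs W w k side q L' HL ltac:(lia) HL' _ A) as (p & Hp & E).
        apply xn_inj in E. lia.
      - exfalso. eapply notin_R; [eauto| | |eauto|eauto]; lia. }
    subst q. split; [|auto].
    exists L', R. split; [auto|split; [auto|]].
    eapply G1; [exact H3|lia|lia].
  - intros ((L & R & H1 & H2 & H3) & He).
    exists (L ++ [xn side j]), R. split; [eapply dpath_ext_r; eauto|split; [auto|]].
    replace (Nat.max j i) with j by lia.
    apply G2. { replace (j-1)%nat with (Nat.max (j-1) i) by lia. auto. }
    eapply notin_R; [eauto| |idtac|eauto]; lia.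
Qed.

Lemma Pd Rs W w k side j : listed W w k side -> (2 <= j <= k)%nat ->
  (Mdef2 Rs W w k side (j - 1) j <-> exists i, (i <= j - 2)%nat /\
     Mdef2 Rs W w k side (j - 1) i /\ Edge Rs W w k (yn side j) (yn side i)).
Proof.
  intros HL Hj. split.
  - intros (L & R & H1 & H2 & H3).
    destruct (Rdec Rs W w k side j R HL ltac:(lia) H2) as (R' & q & Hq & HR' & He & ->).
    assert (q <> j - 1).
    { intros ->. destruct (H3 (j-1)%nat ltac:(lia)) as [[A B]|[A B]].
      - apply B. right. eapply In_head_dpath; eauto.
      - apply A. eapply In_last_dpath; eauto. }
    exists q. split; [lia|]. split; [|auto].
    exists L, R'. split; [auto|split; [auto|]].
    eapply G3; [exact H3|lia|lia].
  - intros (i & Hi & (L & R & H1 & H2 & H3) & He).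
    exists L, (yn side j :: R). split; [auto|split; [eapply dpath_ext_l; eauto|]].
    replace (Nat.max (j-1) j) with j by lia.
    apply G4. { replace (j-1)%nat with (Nat.max (j-1) i) by lia. auto. }
    eapply notin_L; [eauto| |idtac|eauto]; lia.
Qed.

Lemma cond_set_tab e s a b u v c d x y :
  tab (cond_set e s a b u v c d) x y =
  tab s x y || (tab s a b && e u v && Nat.eqb x c && Nat.eqb y d).
Proof.
  unfold cond_set. destruct (tab s a b && e u v); simpl.
  - destruct (Nat.eqb x c), (Nat.eqb y d); simpl; btauto.
  - btauto.
Qed.

Lemma cond_set_ticks e s a b u v c d : (ticks (cond_set e s a b u v c d) <= ticks s + 3)%nat.
Proof. unfold cond_set. destruct (tab s a b && e u v); simpl; lia. Qed.

Lemma body_ticks e side j i s : (ticks (body e side j i s) <= ticks s + 13)%nat.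
Proof.
  unfold body.
  repeat match goal with |- context [ticks (cond_set ?e ?s ?a ?b ?u ?v ?c ?d)] =>
    pose proof (cond_set_ticks e s a b u v c d); generalize dependent (ticks (cond_set e s a b u v c d)) end.
  simpl. intros. lia.
Qed.

Lemma body_tab e side j i s x y : (i + 2 <= j)%nat ->
  tab (body e side j i s) x y =
  tab s x y
  || (tab s i (j-1) && e (xn side i) (xn side j) && Nat.eqb x j && Nat.eqb y (j-1))
  || (tab s i (j-1) && e (yn side j) (yn side (j-1)) && Nat.eqb x i && Nat.eqb y j)
  || (tab s (j-1) i && e (xn side (j-1)) (xn side j) && Nat.eqb x j && Nat.eqb y i)
  || (tab s (j-1) i && e (yn side j) (yn side i) && Nat.eqb x (j-1) && Nat.eqb y j).
Proof.
  intros Hij. unfold body. rewrite !cond_set_tab. cbn [tab].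
  assert (E1 : Nat.eqb i j = false) by (apply Nat.eqb_neq; lia).
  assert (E2 : Nat.eqb (j-1) j = false) by (apply Nat.eqb_neq; lia).
  assert (E3 : Nat.eqb i (j-1) = false) by (apply Nat.eqb_neq; lia).
  assert (E4 : Nat.eqb (j-1) i = false) by (apply Nat.eqb_neq; lia).
  rewrite ?E1, ?E2, ?E3, ?E4, ?Nat.eqb_refl. btauto.
Qed.

Definition finit (i j : nat) := Nat.eqb i 0 && Nat.eqb j 0.

Lemma init_inner i l s x y :
  tab (fold_left (fun s j => write s i j (Nat.eqb i 0 && Nat.eqb j 0)) l s) x y =
  if Nat.eqb x i && existsb (Nat.eqb y) l then finit x y else tab s x y.
Proof.
  revert s; induction l as [|a l IH]; intros s; simpl.
  - rewrite andb_false_r. reflexivity.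
  - rewrite IH. simpl.
    destruct (Nat.eqb_spec x i), (Nat.eqb_spec y a); subst; simpl; try reflexivity.
    destruct (existsb (Nat.eqb a) l); reflexivity.
Qed.

Lemma init_inner_ticks i l s :
  ticks (fold_left (fun s j => write s i j (Nat.eqb i 0 && Nat.eqb j 0)) l s) = (ticks s + length l)%nat.
Proof. revert s; induction l as [|a l IH]; intros s; simpl; [lia|]. rewrite IH. simpl. lia. Qed.

Lemma init_outer l l2 s x y :
  tab (fold_left (fun s i => fold_left (fun s j => write s i j (Nat.eqb i 0 && Nat.eqb j 0)) l2 s) l s) x y =
  if existsb (Nat.eqb x) l && existsb (Nat.eqb y) l2 then finit x y else tab s x y.
Proof.
  revert s; induction l as [|a l IH]; intros s; simpl; [reflexivity|].
  rewrite IH, init_inner.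
  destruct (Nat.eqb_spec x a); subst; simpl;
  destruct (existsb (Nat.eqb y) l2); simpl; rewrite ?andb_false_r; try reflexivity.
  destruct (existsb (Nat.eqb a) l); reflexivity.
Qed.

Lemma init_outer_ticks l l2 s :
  ticks (fold_left (fun s i => fold_left (fun s j => write s i j (Nat.eqb i 0 && Nat.eqb j 0)) l2 s) l s) =
  (ticks s + length l * length l2)%nat.
Proof. revert s; induction l as [|a l IH]; intros s; simpl; [lia|]. rewrite IH, init_inner_ticks. lia. Qed.

Lemma existsb_seq x k : existsb (Nat.eqb x) (seq 0 (S k)) = Nat.leb x k.
Proof.
  apply eq_true_iff_eq. rewrite existsb_exists, Nat.leb_le. split.
  - intros (y & Hy & E). apply in_seq in Hy. apply Nat.eqb_eq in E. lia.
  - intros H. exists x. rewrite in_seq, Nat.eqb_refl. split; [lia|auto].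
Qed.

Definition Inv Rs W w k side j m (T : nat -> nat -> bool) := forall x y, T x y = true <->
  ((Nat.max x y <= j - 1)%nat /\ Mdef2 Rs W w k side x y) \/
  (x = j /\ y = j - 1 /\ exists i, (i < m)%nat /\ Mdef2 Rs W w k side i (j-1) /\
      Edge Rs W w k (xn side i) (xn side j)) \/
  ((x < m)%nat /\ y = j /\ Mdef2 Rs W w k side x j) \/
  ((y < m)%nat /\ x = j /\ Mdef2 Rs W w k side j y) \/
  (x = j - 1 /\ y = j /\ exists i, (i < m)%nat /\ Mdef2 Rs W w k side (j-1) i /\
      Edge Rs W w k (yn side j) (yn side i)).

Definition OInv Rs W w k side j (T : nat -> nat -> bool) := forall x y, T x y = true <->
  ((Nat.max x y <= j)%nat /\ Mdef2 Rs W w k side x y).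

Definition Oracle Rs W w k (e : ncnode -> ncnode -> bool) :=
  forall u v, in_V k u -> in_V k v -> (e u v = true <-> Edge Rs W w k u v).

Lemma in_V_xn k side p : (p <= k)%nat -> in_V k (xn side p).
Proof. unfold in_V. rewrite ion_xn. auto. Qed.
Lemma in_V_yn k side p : (p <= k)%nat -> in_V k (yn side p).
Proof. unfold in_V. rewrite ion_yn. auto. Qed.

Lemma inv_step Rs W w k side e j m s : listed W w k side -> Oracle Rs W w k e ->
  (2 <= j <= k)%nat -> (m + 2 <= j)%nat ->
  Inv Rs W w k side j m (tab s) -> Inv Rs W w k side j (S m) (tab (body e side j m s)).
Proof.
  intros HL HO Hj Hm HI. unfold Inv in HI |- *. intros x y. rewrite body_tab by lia.
  assert (R1 : tab s m (j-1) = true <-> Mdef2 Rs W w k side m (j-1)).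
  { rewrite HI. split.
    - intros [[_ H]|[(?&_)|[(?&_)|[(_&?&_)|(?&_)]]]]; auto; lia.
    - intros H. left. split; [lia|auto]. }
  assert (R2 : tab s (j-1) m = true <-> Mdef2 Rs W w k side (j-1) m).
  { rewrite HI. split.
    - intros [[_ H]|[(?&_)|[(?&_)|[(_&?&_)|(?&?&_)]]]]; auto; lia.
    - intros H. left. split; [lia|auto]. }
  assert (O1 : e (xn side m) (xn side j) = true <-> Edge Rs W w k (xn side m) (xn side j))
    by (apply HO; apply in_V_xn; lia).
  assert (O2 : e (yn side j) (yn side (j-1)) = true <-> Edge Rs W w k (yn side j) (yn side (j-1)))
    by (apply HO; apply in_V_yn; lia).
  assert (O3 : e (xn side (j-1)) (xn side j) = true <-> Edge Rs W w k (xn side (j-1)) (xn side j))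
    by (apply HO; apply in_V_xn; lia).
  assert (O4 : e (yn side j) (yn side m) = true <-> Edge Rs W w k (yn side j) (yn side m))
    by (apply HO; apply in_V_yn; lia).
  pose proof (Pb Rs W w k side j m HL Hj ltac:(lia)) as PB.
  pose proof (Pc Rs W w k side j m HL Hj ltac:(lia)) as PC.
  rewrite !orb_true_iff, !andb_true_iff, !Nat.eqb_eq, R1, R2, O1, O2, O3, O4, HI.
  split.
  - intros [[[[H|H]|H]|H]|H].
    + destruct H as [H|[H|[H|[H|H]]]].
      * left; auto.
      * right; left. destruct H as (?&?&i&?&?&?). split; [auto|split; [auto|]]. exists i. split; [lia|auto].
      * right; right; left. destruct H as (?&?&?). split; [lia|auto].
      * right; right; right; left. destruct H as (?&?&?). split; [lia|auto].
      * right; right; right; right. destruct H as (?&?&i&?&?&?). split; [auto|split; [auto|]]. exists i. split; [lia|auto].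
    + destruct H as (((?&?)&?)&?). right; left. split; [auto|split; [auto|]]. exists m. split; [lia|auto].
    + destruct H as (((?&?)&?)&?). subst. right; right; left. split; [lia|split; [auto|]]. apply PB; auto.
    + destruct H as (((?&?)&?)&?). subst. right; right; right; left. split; [lia|split; [auto|]]. apply PC; auto.
    + destruct H as (((?&?)&?)&?). right; right; right; right. split; [auto|split; [auto|]]. exists m. split; [lia|auto].
  - intros [H|[H|[H|[H|H]]]].
    + left; left; left; left; left; auto.
    + destruct H as (?&?&i&?&?&?). destruct (Nat.eq_dec i m) as [->|].
      * left; left; left; right. auto.
      * left; left; left; left; right; left. split; [auto|split; [auto|]]. exists i. split; [lia|auto].
    + destruct H as (?&?&?). destruct (Nat.eq_dec x m) as [->|].
      * left; left; right. apply PB in H1. subst. tauto.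
      * left; left; left; left; right; right; left. split; [lia|auto].
    + destruct H as (?&?&?). destruct (Nat.eq_dec y m) as [->|].
      * left; right. apply PC in H1. subst. tauto.
      * left; left; left; left; right; right; right; left. split; [lia|auto].
    + destruct H as (?&?&i&?&?&?). destruct (Nat.eq_dec i m) as [->|].
      * right. auto.
      * left; left; left; left; right; right; right; right. split; [auto|split; [auto|]]. exists i. split; [lia|auto].
Qed.

Lemma inner_loop Rs W w k side e j : listed W w k side -> Oracle Rs W w k e ->
  (2 <= j <= k)%nat -> forall m s, (m + 1 <= j)%nat ->
  Inv Rs W w k side j 0 (tab s) ->
  Inv Rs W w k side j m (tab (fold_left (fun s i => body e side j i s) (seq 0 m) s)) /\
  (ticks (fold_left (fun s i => body e side j i s) (seq 0 m) s) <= ticks s + 13 * m)%nat.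
Proof.
  intros HL HO Hj. induction m as [|m IH]; intros s Hm HI.
  - simpl. split; [auto|lia].
  - rewrite seq_S, fold_left_app. simpl.
    destruct (IH s ltac:(lia) HI) as [I1 T1].
    split.
    + apply inv_step; auto; lia.
    + pose proof (body_ticks e side j m (fold_left (fun s i => body e side j i s) (seq 0 m) s)). lia.
Qed.

Lemma inv_start Rs W w k side j T : OInv Rs W w k side (j - 1) T -> Inv Rs W w k side j 0 T.
Proof.
  unfold OInv, Inv. intros H x y. rewrite H. split.
  - intros; left; auto.
  - intros [H1|[(_&_&i&Hi&_)|[(Hx&_)|[(Hy&_)|(_&_&i&Hi&_)]]]]; auto; lia.
Qed.

Lemma inv_end Rs W w k side j T : listed W w k side -> (2 <= j <= k)%nat ->
  Inv Rs W w k side j (j - 1) T -> OInv Rs W w k side j T.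
Proof.
  unfold OInv, Inv. intros HL Hj H x y. rewrite H.
  pose proof (Pa Rs W w k side j HL Hj) as PA.
  pose proof (Pd Rs W w k side j HL Hj) as PD.
  split.
  - intros [[H1 H2]|[(->&->&HH)|[(Hx&->&HH)|[(Hy&->&HH)|(->&->&HH)]]]].
    + split; [lia|auto].
    + split; [lia|]. apply PA. destruct HH as (i&?&?&?). exists i. split; [lia|auto].
    + split; [lia|auto].
    + split; [lia|auto].
    + split; [lia|]. apply PD. destruct HH as (i&?&?&?). exists i. split; [lia|auto].
  - intros [Hmax HM].
    destruct (le_lt_dec (Nat.max x y) (j-1)) as [Hle|Hlt]; [left; auto|].
    assert (x = j \/ y = j) as [->| ->] by lia.
    + destruct (Nat.eq_dec y j) as [->|]; [exfalso; eapply Pdiag; [|exact HM]; lia|].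
      destruct (Nat.eq_dec y (j-1)) as [->|].
      * right; left. split; [auto|split; [auto|]]. apply PA in HM.
        destruct HM as (i&?&?&?). exists i. split; [lia|auto].
      * right; right; right; left. split; [lia|auto].
    + destruct (Nat.eq_dec x (j-1)) as [->|].
      * right; right; right; right. split; [auto|split; [auto|]]. apply PD in HM.
        destruct HM as (i&?&?&?). exists i. split; [lia|auto].
      * right; right; left. split; [|split; [auto|auto]]. destruct (Nat.eq_dec x j) as [->|]; [exfalso; eapply Pdiag; [|exact HM]; lia|lia].
Qed.

Lemma outer_loop Rs W w k side e : listed W w k side -> Oracle Rs W w k e ->
  forall n s, (n + 1 <= k)%nat -> OInv Rs W w k side 1 (tab s) ->
  let s' := fold_left
    (fun s j => fold_left (fun s i => body e side j i s)
                          (seq 0 (j - 1)) (St (tab s) (S (ticks s))))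
    (seq 2 n) s in
  OInv Rs W w k side (n + 1) (tab s') /\ (ticks s' <= ticks s + n * (1 + 13 * k))%nat.
Proof.
  intros HL HO. induction n as [|n IH]; intros s Hn HI; cbv zeta.
  - simpl; split; [auto|lia].
  - rewrite seq_S, fold_left_app. cbn [fold_left].
    destruct (IH s ltac:(lia) HI) as [I1 T1].
    set (s1 := fold_left _ (seq 2 n) s) in *.
    replace (2 + n - 1)%nat with (S n) by lia.
    destruct (inner_loop Rs W w k side e (2 + n) HL HO ltac:(lia) (S n)
                (St (tab s1) (S (ticks s1))) ltac:(lia)) as [I2 T2].
    { simpl. apply inv_start. replace (S (S n) - 1)%nat with (n + 1)%nat by lia. auto. }
    split.
    + replace (S n + 1)%nat with (2 + n)%nat by lia.
      apply inv_end; [auto|lia|]. replace (2 + n - 1)%nat with (S n) by lia. exact I2.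
    + cbn [ticks] in T2. nia.
Qed.

Lemma s1_tab k x y :
  tab (fold_left
    (fun s i => fold_left (fun s j => write s i j (Nat.eqb i 0 && Nat.eqb j 0))
                          (seq 0 (S k)) s)
    (seq 0 (S k)) (St (fun _ _ => false) 0)) x y = (Nat.eqb x 0 && Nat.eqb y 0).
Proof.
  rewrite init_outer, !existsb_seq. unfold finit. simpl.
  destruct (Nat.leb_spec x k), (Nat.leb_spec y k);
  destruct (Nat.eqb_spec x 0), (Nat.eqb_spec y 0); simpl; try reflexivity; lia.
Qed.

Lemma s1_ticks k :
  ticks (fold_left
    (fun s i => fold_left (fun s j => write s i j (Nat.eqb i 0 && Nat.eqb j 0))
                          (seq 0 (S k)) s)
    (seq 0 (S k)) (St (fun _ _ => false) 0)) = (S k * S k)%nat.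
Proof. rewrite init_outer_ticks, length_seq. simpl. lia. Qed.

Theorem lemma2 :
  exists c : nat,
  forall (Rs : list R) (W : R) (w : nat -> R) (k : nat) (side : nat -> bool)
         (e : ncnode -> ncnode -> bool),
    Forall (fun r => (0 < r)%R) Rs ->
    listed W w k side ->
    (forall u v, in_V k u -> in_V k v -> (e u v = true <-> Edge Rs W w k u v)) ->
    (forall i j, (i <= k)%nat -> (j <= k)%nat ->
       (tab (compute_M e side k) i j = true <-> Mdef Rs W w k side i j)) /\
    (ticks (compute_M e side k) <= c * (2 * k + 2) ^ 2)%nat.
Proof.
  exists 5%nat. intros Rs W w k side e _ HL HO.
  assert (HO' : Oracle Rs W w k e) by exact HO.
  assert (Hfin : OInv Rs W w k side k (tab (compute_M e side k)) /\
                 (ticks (compute_M e side k) <= 5 * (2 * k + 2) ^ 2)%nat).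
  2:{ destruct Hfin as [H1 H2]. split; [|exact H2]. intros i j Hi Hj. unfold OInv in H1.
      rewrite H1, Mdef_iff by auto. split; [tauto|]. intros; split; [lia|auto]. }
  unfold compute_M. cbv zeta.
  set (s1 := fold_left _ (seq 0 (S k)) _).
  assert (T1 : forall x y, tab s1 x y = (Nat.eqb x 0 && Nat.eqb y 0)) by apply s1_tab.
  assert (K1 : ticks s1 = (S k * S k)%nat) by apply s1_ticks.
  clearbody s1.
  destruct (Nat.leb_spec 1 k) as [Hk|Hk].
  - set (s2 := write (write _ 1 0 _) 0 1 _).
    assert (O2 : OInv Rs W w k side 1 (tab s2)).
    { intros x y. subst s2. unfold write; cbn [tab].
      destruct x as [|[|x]], y as [|[|y]]; simpl; rewrite ?T1; simpl.
      - split; [intros _; split; [lia|apply P00]|auto].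
      - rewrite (P01 Rs W w k side HL Hk). split; [intros H; split; [lia|]|intros [_ H]]; apply HO; auto; unfold in_V; simpl; try destruct (side 1); simpl; lia.
      - split; [discriminate|intros [H _]; lia].
      - rewrite (P10 Rs W w k side HL Hk). split; [intros H; split; [lia|]|intros [_ H]]; apply HO; auto; unfold in_V; simpl; try destruct (side 1); simpl; lia.
      - split; [discriminate|intros [_ H]; exfalso; eapply Pdiag; [|exact H]; lia].
      - split; [discriminate|intros [H _]; lia].
      - split; [discriminate|intros [H _]; lia].
      - split; [discriminate|intros [H _]; lia].
      - split; [discriminate|intros [H _]; lia]. }
    assert (K2 : ticks s2 = (ticks s1 + 4)%nat) by (subst s2; simpl; lia).
    clearbody s2.
    destruct (outer_loop Rs W w k side e HL HO' (k - 1) s2 ltac:(lia) O2) as [I3 T3].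
    replace (k - 1 + 1)%nat with k in I3 by lia.
    split; [exact I3|]. eapply Nat.le_trans; [exact T3|]. rewrite K2, K1. destruct k as [|k]; [lia|]. replace (S k - 1)%nat with k by lia. simpl. nia.
  - assert (k = 0%nat) by lia. subst k. simpl. split.
    + intros x y. rewrite T1. split.
      * intros H. apply andb_true_iff in H. destruct H as [H1 H2].
        apply Nat.eqb_eq in H1, H2. subst. split; [lia|apply P00].
      * intros [H _]. assert (x = 0%nat) by lia. assert (y = 0%nat) by lia. subst. reflexivity.
    + rewrite K1. lia.
Qed.
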